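(* For each $\eta\in(0,\pi/3)$, $f_1(\mathrm{co}(V))\cup f_2(\mathrm{co}(V))\subset\mathrm{co}(V)$, where $V=\{b_0\}\cup\{z_k:k\ge0\}\cup\{w_k:k\ge1\}$.
   Context: For $\eta\in(0,\pi/3)$ let $a=\frac{e^{-i\eta}}{2\cos\eta}$, $f_1(z)=az$, $f_2(z)=1-\bar az$, $c=\frac{1}{1-|a|^4}$, and for integers $k\ge0$ put $z_k=ca^{k+1}$, $w_k=1-c|a|^2a^k$, $b_k=a+c|a|^4a^k$. $\mathrm{co}$ denotes convex hull. *)

(* Defs.v *)
From Stdlib Require Import Reals List.
From Coquelicot Require Import Coquelicot.
Open Scope R_scope.

Fixpoint Cpow (z : C) (n : nat) : C :=
  match n with O => RtoC 1 | S k => Cmult z (Cpow z k) end.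

Definition Cexpi (t : R) : C := (cos t, sin t).

Definition a_of (eta : R) : C := Cdiv (Cexpi (- eta)) (RtoC (2 * cos eta)).
Definition f1 (eta : R) (z : C) : C := Cmult (a_of eta) z.
Definition f2 (eta : R) (z : C) : C :=
  Cminus (RtoC 1) (Cmult (Cconj (a_of eta)) z).
Definition c_of (eta : R) : R := 1 / (1 - (Cmod (a_of eta)) ^ 4).
Definition z_k (eta : R) (k : nat) : C :=
  Cmult (RtoC (c_of eta)) (Cpow (a_of eta) (S k)).
Definition w_k (eta : R) (k : nat) : C :=
  Cminus (RtoC 1)
    (Cmult (RtoC (c_of eta * (Cmod (a_of eta)) ^ 2)) (Cpow (a_of eta) k)).
Definition b_k (eta : R) (k : nat) : C :=
  Cplus (a_of eta)
    (Cmult (RtoC (c_of eta * (Cmod (a_of eta)) ^ 4)) (Cpow (a_of eta) k)).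

Definition Vset (eta : R) (v : C) : Prop :=
  v = b_k eta 0 \/ (exists k : nat, v = z_k eta k)
  \/ (exists k : nat, (1 <= k)%nat /\ v = w_k eta k).

Definition co (S : C -> Prop) (z : C) : Prop :=
  exists l : list (R * C),
    List.Forall (fun p => 0 <= fst p /\ S (snd p)) l /\
    List.fold_right Rplus 0 (List.map fst l) = 1 /\
    z = List.fold_right Cplus (RtoC 0) (List.map (fun p => Cmult (RtoC (fst p)) (snd p)) l).

(* Main.v *)
Require Import Defs.
From Stdlib Require Import Reals Lra Lia List.
From Coquelicot Require Import Coquelicot.
Open Scope R_scope.

Lemma C_ext (u v : C) : fst u = fst v -> snd u = snd v -> u = v.
Proof. destruct u, v; simpl; intros; subst; reflexivity. Qed.

Definition csum (l : list (R * C)) : C :=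
  fold_right Cplus (RtoC 0) (map (fun p => Cmult (RtoC (fst p)) (snd p)) l).
Definition wsum (l : list (R * C)) : R := fold_right Rplus 0 (map fst l).

Lemma co_in (S : C -> Prop) v : S v -> co S v.
Proof.
  intros H. exists ((1, v) :: nil). split; [|split].
  - constructor; [simpl; split; [lra|exact H]|constructor].
  - simpl; ring.
  - apply C_ext; simpl; ring.
Qed.

Lemma wsum_scale (t : R) l :
  wsum (map (fun p => (t * fst p, snd p)) l) = t * wsum l.
Proof. induction l as [|p l IH]; unfold wsum in *; simpl; [ring|rewrite IH; ring]. Qed.

Lemma csum_scale (t : R) l :
  csum (map (fun p => (t * fst p, snd p)) l) = Cmult (RtoC t) (csum l).
Proof.
  induction l as [|p l IH]; unfold csum in *; simpl.
  - apply C_ext; simpl; ring.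
  - rewrite IH. apply C_ext; simpl; ring.
Qed.

Lemma wsum_app l1 l2 : wsum (l1 ++ l2) = wsum l1 + wsum l2.
Proof. induction l1 as [|p l IH]; unfold wsum in *; simpl; [ring|rewrite IH; ring]. Qed.

Lemma csum_app l1 l2 : csum (l1 ++ l2) = Cplus (csum l1) (csum l2).
Proof.
  induction l1 as [|p l IH]; unfold csum in *; simpl.
  - apply C_ext; simpl; ring.
  - rewrite IH. apply C_ext; simpl; ring.
Qed.

Lemma co_convex2 (S : C -> Prop) u v t :
  co S u -> co S v -> 0 <= t <= 1 ->
  co S (Cplus (Cmult (RtoC t) u) (Cmult (RtoC (1 - t)) v)).
Proof.
  intros (l1 & F1 & W1 & E1) (l2 & F2 & W2 & E2) Ht.
  exists (map (fun p => (t * fst p, snd p)) l1 ++ map (fun p => ((1 - t) * fst p, snd p)) l2).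
  split; [|split].
  - apply List.Forall_app; split; apply List.Forall_map;
      [eapply List.Forall_impl; [|exact F1]|eapply List.Forall_impl; [|exact F2]];
      intros [x y] [Hx Hy]; simpl in *; split; auto; nra.
  - change (wsum (map (fun p => (t * fst p, snd p)) l1 ++ map (fun p => ((1 - t) * fst p, snd p)) l2) = 1).
    rewrite wsum_app, !wsum_scale. unfold wsum. rewrite W1, W2. ring.
  - change (Cplus (Cmult (RtoC t) u) (Cmult (RtoC (1 - t)) v) = csum (map (fun p => (t * fst p, snd p)) l1 ++ map (fun p => ((1 - t) * fst p, snd p)) l2)).
    rewrite csum_app, !csum_scale. unfold csum. rewrite <- E1, <- E2. reflexivity.
Qed.

Lemma csum_zero l : List.Forall (fun p => 0 <= fst p) l -> wsum l = 0 -> csum l = RtoC 0.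
Proof.
  induction l as [|p l IH]; intros F W.
  - reflexivity.
  - inversion F; subst. unfold wsum in W; simpl in W.
    assert (0 <= wsum l).
    { clear - H2. induction l; unfold wsum in *; simpl; [lra|]. inversion H2; subst. specialize (IHl H3). lra. }
    unfold wsum in H. assert (fst p = 0) by lra.
    assert (wsum l = 0) by (unfold wsum; lra).
    unfold csum; simpl. fold (csum l). rewrite IH; auto. rewrite H0.
    apply C_ext; simpl; ring.
Qed.

Lemma wsum_nonneg l : List.Forall (fun p => 0 <= fst p) l -> 0 <= wsum l.
Proof. induction l; intros F; unfold wsum in *; simpl; [lra|]. inversion F; subst. specialize (IHl H2). lra. Qed.

Lemma co_comb_gen (S : C -> Prop) l :
  List.Forall (fun p => 0 <= fst p /\ co S (snd p)) l -> 0 < wsum l ->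
  co S (Cmult (RtoC (/ wsum l)) (csum l)).
Proof.
  induction l as [|[x p] l IH]; intros F W.
  - unfold wsum in W; simpl in W; lra.
  - inversion F; subst. simpl in H1. destruct H1 as [Hx Hp].
    assert (Fn : List.Forall (fun p => 0 <= fst p) l).
    { eapply List.Forall_impl; [|exact H2]. intros q [? ?]; auto. }
    pose proof (wsum_nonneg l Fn) as Hs.
    assert (Ew : wsum ((x, p) :: l) = x + wsum l) by reflexivity.
    assert (Ec : csum ((x, p) :: l) = Cplus (Cmult (RtoC x) p) (csum l)) by reflexivity.
    rewrite Ew, Ec. rewrite Ew in W.
    destruct (Req_dec (wsum l) 0) as [Z|NZ].
    + rewrite (csum_zero l Fn Z), Z.
      replace (Cmult (RtoC (/ (x + 0))) (Cplus (Cmult (RtoC x) p) (RtoC 0))) with p.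
      * exact Hp.
      * apply C_ext; simpl; field; lra.
    + assert (Hpos : 0 < wsum l) by lra.
      specialize (IH H2 Hpos).
      set (u := Cmult (RtoC (/ wsum l)) (csum l)) in *.
      replace (Cmult (RtoC (/ (x + wsum l))) (Cplus (Cmult (RtoC x) p) (csum l)))
        with (Cplus (Cmult (RtoC (x / (x + wsum l))) p) (Cmult (RtoC (1 - x / (x + wsum l))) u)).
      * apply co_convex2; auto. split.
        -- apply Rdiv_le_0_compat; lra.
        -- apply Rmult_le_reg_r with (x + wsum l); [lra|]. unfold Rdiv. rewrite Rmult_assoc, Rinv_l; lra.
      * unfold u. destruct (csum l) as [c1 c2]. apply C_ext; simpl; field; lra.
Qed.

Lemma co_comb (S : C -> Prop) l :
  List.Forall (fun p => 0 <= fst p /\ co S (snd p)) l -> wsum l = 1 -> co S (csum l).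
Proof.
  intros F W. pose proof (co_comb_gen S l F) as H. rewrite W in H.
  replace (csum l) with (Cmult (RtoC (/ 1)) (csum l)); [apply H; lra|].
  destruct (csum l); apply C_ext; simpl; field.
Qed.

Lemma co_image (S T : C -> Prop) (f : C -> C) :
  (forall l, wsum l = 1 -> f (csum l) = csum (map (fun p => (fst p, f (snd p))) l)) ->
  (forall v, S v -> co T (f v)) ->
  forall z, co S z -> co T (f z).
Proof.
  intros Haff Hv z (l & F & W & E).
  fold (wsum l) in W. fold (csum l) in E. subst z. rewrite Haff by exact W.
  apply co_comb.
  - apply List.Forall_map. eapply List.Forall_impl; [|exact F]. intros [x y] [Hx Hy]; simpl; auto.
  - unfold wsum. rewrite map_map. simpl. exact W.
Qed.

Definition pt (h x y : R) : C := (x + y / 2, y * h).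

Fixpoint Qn (r : R) (n : nat) : R :=
  match n with
  | O => 0
  | S m => match m with O => 1 | S p => Qn r m - r * Qn r p end
  end.
Definition Pn (r : R) (n : nat) : R := match n with O => 1 | S m => - r * Qn r m end.

Lemma Qrec r n : Qn r (S (S n)) = Qn r (S n) - r * Qn r n.
Proof. reflexivity. Qed.
Lemma Qn_S r n : Qn r (S n) = Pn r n + Qn r n.
Proof. destruct n; simpl; ring. Qed.

Lemma pt_comb (S : C -> Prop) h (L : list (R * (R * R))) x y :
  List.Forall (fun q => 0 <= fst q /\ co S (pt h (fst (snd q)) (snd (snd q)))) L ->
  fold_right Rplus 0 (map fst L) = 1 ->
  x = fold_right Rplus 0 (map (fun q => fst q * fst (snd q)) L) ->
  y = fold_right Rplus 0 (map (fun q => fst q * snd (snd q)) L) ->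
  co S (pt h x y).
Proof.
  intros F W Ex Ey.
  set (l := map (fun q => (fst q, pt h (fst (snd q)) (snd (snd q)))) L).
  assert (Hl : csum l = pt h x y).
  { subst x y l. clear F W. induction L as [|q L IH]; unfold csum, pt in *; simpl.
    - apply C_ext; simpl; field.
    - unfold csum, pt in IH. rewrite IH. apply C_ext; simpl; field. }
  rewrite <- Hl. apply co_comb.
  - subst l. apply List.Forall_map. eapply List.Forall_impl; [|exact F]. intros q H; exact H.
  - subst l. unfold wsum. rewrite map_map. exact W.
Qed.

Lemma comb3 (S : C -> Prop) h x y l1 x1 y1 l2 x2 y2 l3 x3 y3 :
  co S (pt h x1 y1) -> co S (pt h x2 y2) -> co S (pt h x3 y3) ->
  0 <= l1 -> 0 <= l2 -> 0 <= l3 -> l1 + l2 + l3 = 1 ->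
  x = l1 * x1 + l2 * x2 + l3 * x3 -> y = l1 * y1 + l2 * y2 + l3 * y3 ->
  co S (pt h x y).
Proof.
  intros H1 H2 H3 P1 P2 P3 W Ex Ey.
  apply (pt_comb S h ((l1,(x1,y1))::(l2,(x2,y2))::(l3,(x3,y3))::nil)).
  - repeat (apply List.Forall_cons; [simpl; split; auto|]); apply List.Forall_nil.
  - simpl; lra.
  - rewrite Ex; simpl; ring.
  - rewrite Ey; simpl; ring.
Qed.

Lemma comb5 (S : C -> Prop) h x y l1 x1 y1 l2 x2 y2 l3 x3 y3 l4 x4 y4 l5 x5 y5 :
  co S (pt h x1 y1) -> co S (pt h x2 y2) -> co S (pt h x3 y3) ->
  co S (pt h x4 y4) -> co S (pt h x5 y5) ->
  0 <= l1 -> 0 <= l2 -> 0 <= l3 -> 0 <= l4 -> 0 <= l5 -> l1 + l2 + l3 + l4 + l5 = 1 ->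
  x = l1 * x1 + l2 * x2 + l3 * x3 + l4 * x4 + l5 * x5 ->
  y = l1 * y1 + l2 * y2 + l3 * y3 + l4 * y4 + l5 * y5 ->
  co S (pt h x y).
Proof.
  intros H1 H2 H3 H4 H5 P1 P2 P3 P4 P5 W Ex Ey.
  apply (pt_comb S h ((l1,(x1,y1))::(l2,(x2,y2))::(l3,(x3,y3))::(l4,(x4,y4))::(l5,(x5,y5))::nil)).
  - repeat (apply List.Forall_cons; [simpl; split; auto|]); apply List.Forall_nil.
  - simpl; lra.
  - rewrite Ex; simpl; ring.
  - rewrite Ey; simpl; ring.
Qed.

Definition Zp h r c k := pt h (- c * r * Qn r k) (c * Qn r (S k)).
Definition Wp h r c k := pt h (1 - c * r * Pn r k) (- c * r * Qn r k).
Definition Vp h r c (v : C) : Prop :=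
  v = pt h (c * r * r) 1 \/ (exists k, v = Zp h r c k) \/ (exists k, (1 <= k)%nat /\ v = Wp h r c k).

Definition F1 (h : R) (v : C) : C := Cmult (1/2, h) v.
Definition F2 (h : R) (v : C) : C := Cminus (RtoC 1) (Cmult (Cconj (1/2, h)) v).

Lemma F1_pt h r x y : r = 1/4 + h * h -> F1 h (pt h x y) = pt h (- r * y) (x + y).
Proof. intros ->. unfold F1, pt. apply C_ext; simpl; field. Qed.
Lemma F2_pt h r x y : r = 1/4 + h * h -> F2 h (pt h x y) = pt h (1 - x - r * y) x.
Proof. intros ->. unfold F2, Cminus, pt. apply C_ext; simpl; field. Qed.

Lemma Inv r n : Qn r (S n) ^ 2 - Qn r (S n) * Qn r n + r * Qn r n ^ 2 = r ^ n.
Proof.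
  induction n as [|n IH].
  - simpl; ring.
  - rewrite Qrec. change (r ^ S n) with (r * r ^ n). rewrite <- IH. ring.
Qed.

Lemma pow_anti r m n : 0 < r <= 1 -> (m <= n)%nat -> r ^ n <= r ^ m.
Proof.
  intros Hr H. induction H as [|n H IH].
  - lra.
  - simpl. assert (0 <= r ^ n) by (apply pow_le; lra). nra.
Qed.

Lemma Qbound r s : 1/4 <= r -> 0 <= s -> s * s = r ->
  forall n, - (INR n * s ^ (n - 1)) <= Qn r n <= INR n * s ^ (n - 1).
Proof.
  intros Hr Hs Hsr.
  assert (P : forall n, (- (INR n * s ^ (n - 1)) <= Qn r n <= INR n * s ^ (n - 1)) /\
                        (- (INR (S n) * s ^ (S n - 1)) <= Qn r (S n) <= INR (S n) * s ^ (S n - 1))).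
  { induction n as [|n [IH1 IH2]].
    - simpl. split; lra.
    - split; [exact IH2|].
      assert (E : (2 * Qn r (S (S n)) - Qn r (S n)) ^ 2 <= (2 * s ^ (S n)) ^ 2).
      { assert (HI := Inv r (S n)).
        replace ((2 * s ^ S n) ^ 2) with (4 * r ^ S n).
        - assert (0 <= Qn r (S n) ^ 2) by (apply pow2_ge_0). nra.
        - rewrite <- Hsr, Rpow_mult_distr. ring. }
      assert (Hsp : 0 <= s ^ S n) by (apply pow_le; lra).
      assert (E2 : - (2 * s ^ S n) <= 2 * Qn r (S (S n)) - Qn r (S n) <= 2 * s ^ S n) by nra.
      replace (S (S n) - 1)%nat with (S n) by lia.
      replace (n - 1)%nat with (S n - 2)%nat in IH1 by lia.
      assert (Ht : Qn r (S (S n)) = r * Qn r n + (2 * Qn r (S (S n)) - Qn r (S n))).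
      { rewrite Qrec. ring. }
      destruct n as [|n].
      + simpl in *. split; nra.
      + replace (S (S n) - 2)%nat with n in IH1 by lia.
        replace (S (S n) - 1)%nat with (S n) in IH2 by lia.
        assert (Hpow : r * s ^ n = s ^ S (S n)) by (rewrite <- Hsr; simpl; ring).
        rewrite !S_INR in *.
        assert (Hb : s ^ S (S (S n)) = s * s ^ S (S n)) by reflexivity.
        split; nra. }
  intros n; apply P.
Qed.

Lemma mono_step s n : 0 <= s <= 2/3 -> (2 <= n)%nat ->
  INR (S n) * s ^ (S n - 1) <= INR n * s ^ (n - 1).
Proof.
  intros Hs Hn. replace (S n - 1)%nat with (S (n - 1)) by lia.
  change (s ^ S (n - 1)) with (s * s ^ (n - 1)).
  assert (0 <= s ^ (n - 1)) by (apply pow_le; lra).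
  rewrite S_INR. assert (2 <= INR n) by (replace 2 with (INR 2) by (simpl; ring); apply le_INR; lia).
  assert (H1 : (INR n + 1) * s <= INR n) by nra.
  replace ((INR n + 1) * (s * s ^ (n - 1))) with (((INR n + 1) * s) * s ^ (n - 1)) by ring.
  apply Rmult_le_compat_r; assumption.
Qed.

Lemma mono s m j : 0 <= s <= 2/3 -> (2 <= m)%nat ->
  INR (j + m) * s ^ (j + m - 1) <= INR m * s ^ (m - 1).
Proof.
  intros Hs Hm. induction j as [|j IH].
  - simpl. lra.
  - eapply Rle_trans; [|exact IH]. change (S j + m)%nat with (S (j + m)).
    apply mono_step; [exact Hs|lia].
Qed.

Lemma pow_ub r b n : 0 <= r <= b -> r ^ n <= b ^ n.
Proof. intros H. apply pow_incr. exact H. Qed.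

Lemma N1 r : 13/50 <= r <= 1/2 -> r ^ 5 <= r - 1/4.
Proof.
  intros H. destruct (Rle_lt_dec r (3/10)) as [H1|H1].
  - assert (r ^ 5 <= (3/10) ^ 5) by (apply pow_ub; lra). simpl in *. lra.
  - assert (r ^ 5 <= (1/2) ^ 5) by (apply pow_ub; lra). simpl in *. lra.
Qed.

Lemma N2 r : 13/50 <= r <= 1/2 -> r ^ 6 <= (r - 1/4) * ((1 - r) * (1 - r)).
Proof.
  intros H. destruct (Rle_lt_dec r (3/10)) as [H1|H1]; [|destruct (Rle_lt_dec r (4/10)) as [H2|H2]].
  - assert (r ^ 6 <= (3/10) ^ 6) by (apply pow_ub; lra).
    assert ((1 - r) * (1 - r) >= 49/100) by nra. simpl in H0. nra.
  - assert (r ^ 6 <= (4/10) ^ 6) by (apply pow_ub; lra).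
    assert ((1 - r) * (1 - r) >= 36/100) by nra. simpl in H0. nra.
  - assert (r ^ 6 <= (1/2) ^ 6) by (apply pow_ub; lra).
    assert ((1 - r) * (1 - r) >= 25/100) by nra. simpl in H0. nra.
Qed.

Lemma sq_bound x y : x ^ 2 <= y ^ 2 -> 0 <= y -> - y <= x <= y.
Proof. intros H Hy. simpl in H. split; nra. Qed.

Lemma regionI r k : 1/4 < r <= 1/2 -> (4 <= k)%nat ->
  0 <= r * r + r * Qn r (S k) /\
  0 <= (r + Qn r (S k)) * (1 - r) - r * Qn r k /\
  0 <= 1 - r - Qn r (S k) + r * Qn r k.
Proof.
  intros Hr Hk.
  destruct k as [|[|[|[|[|[|n]]]]]]; try lia.
  - simpl. split; [|split]; nra.
  - simpl. split; [|split]; nra.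
  - set (k := S (S (S (S (S (S n)))))) in *.
    assert (HZ : Qn r (S (S k)) = Qn r (S k) - r * Qn r k) by apply Qrec.
    set (X := Qn r k) in *. set (Y := Qn r (S k)) in *. set (Z2 := Qn r (S (S k))) in *.
    assert (HI : Y ^ 2 - Y * X + r * X ^ 2 = r ^ k) by apply Inv.
    destruct (Rle_lt_dec (13/50) r) as [Hb|Hs].
    + assert (Hk6 : r ^ k <= r ^ 6) by (apply pow_anti; [lra|unfold k; lia]).
      assert (H1 := N1 r ltac:(lra)). assert (H2 := N2 r ltac:(lra)).
      assert (H7 : r ^ 7 = r * r ^ 6) by reflexivity.
      assert (H6 : r ^ 6 = r * r ^ 5) by reflexivity.
      assert (Hp5 : 0 < r ^ 5) by (apply pow_lt; lra).
      assert (Hp6 : 0 < r ^ 6) by (apply pow_lt; lra).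
      assert (Ik : 0 <= r ^ k) by (apply pow_le; lra).
      assert (A1 : (r - 1/4) * Y ^ 2 <= r * r ^ k).
      { assert (0 <= (Y / 2 - r * X) ^ 2) by apply pow2_ge_0. nra. }
      assert (G1 : Y ^ 2 <= r ^ 2).
      { assert ((r - 1/4) * Y ^ 2 <= (r - 1/4) * (r * r)) by nra. simpl in *. nra. }
      assert (A2 : (r - 1/4) * (r * X - (1 - r) * Y) ^ 2 <= r ^ 3 * r ^ k).
      { assert (0 <= (r * (r - 1/2) * X - (3 * r - 1) * Y / 2) ^ 2) by apply pow2_ge_0. simpl pow in *. nra. }
      assert (G2 : (r * X - (1 - r) * Y) ^ 2 <= (r * (1 - r)) ^ 2).
      { assert ((r - 1/4) * (r * X - (1 - r) * Y) ^ 2 <= (r - 1/4) * (r * (1 - r)) ^ 2).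
        { apply Rle_trans with (r ^ 3 * r ^ k); [exact A2|].
          assert (r ^ 3 * r ^ k <= r ^ 3 * r ^ 6) by (apply Rmult_le_compat_l; [apply pow_le; lra|exact Hk6]).
          assert (r ^ 3 * r ^ 6 <= r ^ 2 * r ^ 6) by (apply Rmult_le_compat_r; [lra|simpl; nra]).
          assert (r ^ 2 * r ^ 6 <= r ^ 2 * ((r - 1/4) * ((1 - r) * (1 - r)))) by (apply Rmult_le_compat_l; [simpl; nra|exact H2]).
          simpl pow in *. nra. }
        nra. }
      assert (A3 : (r - 1/4) * (Y - r * X) ^ 2 <= r ^ 2 * r ^ k).
      { assert (0 <= ((r - 1/2) * Y + r * X / 2) ^ 2) by apply pow2_ge_0. simpl pow in *. nra. }
      assert (G3 : (Y - r * X) ^ 2 <= (1 - r) ^ 2).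
      { assert ((r - 1/4) * (Y - r * X) ^ 2 <= (r - 1/4) * (1 - r) ^ 2).
        { apply Rle_trans with (r ^ 2 * r ^ k); [exact A3|].
          assert (r ^ 2 * r ^ k <= r ^ 2 * r ^ 6) by (apply Rmult_le_compat_l; [apply pow_le; lra|exact Hk6]).
          assert (r ^ 2 * r ^ 6 <= 1 * r ^ 6) by (apply Rmult_le_compat_r; [lra|simpl; nra]).
          simpl pow in *. nra. }
        nra. }
      apply sq_bound in G1; [|nra]. apply sq_bound in G2; [|nra]. apply sq_bound in G3; [|lra].
      split; [|split].
      * replace (r * r + r * Y) with (r * (r + Y)) by ring. apply Rmult_le_pos; lra.
      * lra.
      * lra.
    + set (s := sqrt r).
      assert (Hs0 : 0 <= s) by apply sqrt_pos.
      assert (Hss : s * s = r) by (apply sqrt_sqrt; lra).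
      assert (Hs1 : s <= 51/100) by nra.
      assert (Hs2 : 1/2 <= s) by nra.
      assert (QB := Qbound r s ltac:(lra) Hs0 Hss).
      assert (BX : - (6 * s ^ 5) <= X <= 6 * s ^ 5).
      { destruct (QB k) as [a b]. change (Qn r k) with X in a, b.
        assert (M := mono s 6 n ltac:(lra) ltac:(lia)).
        replace (n + 6)%nat with k in M by (unfold k; lia).
        replace (INR 6) with 6 in M by (simpl; ring). simpl (6 - 1)%nat in M. split; lra. }
      assert (BY : - (7 * s ^ 6) <= Y <= 7 * s ^ 6).
      { destruct (QB (S k)) as [a b]. change (Qn r (S k)) with Y in a, b.
        assert (M := mono s 7 n ltac:(lra) ltac:(lia)).
        replace (n + 7)%nat with (S k) in M by (unfold k; lia).
        replace (INR 7) with 7 in M by (simpl; ring). simpl (7 - 1)%nat in M. split; lra. }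
      assert (BZ : - (8 * s ^ 7) <= Z2 <= 8 * s ^ 7).
      { destruct (QB (S (S k))) as [a b]. change (Qn r (S (S k))) with Z2 in a, b.
        assert (M := mono s 8 n ltac:(lra) ltac:(lia)).
        replace (n + 8)%nat with (S (S k)) in M by (unfold k; lia).
        replace (INR 8) with 8 in M by (simpl; ring). simpl (8 - 1)%nat in M. split; lra. }
      assert (P4 : s ^ 4 <= (51/100) ^ 4) by (apply pow_ub; lra).
      assert (P5 : s ^ 5 <= (51/100) ^ 5) by (apply pow_ub; lra).
      assert (P6 : s ^ 6 <= (51/100) ^ 6) by (apply pow_ub; lra).
      assert (P7 : s ^ 7 <= (51/100) ^ 7) by (apply pow_ub; lra).
      assert (E6 : s ^ 6 = s * s * s ^ 4) by (simpl; ring).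
      assert (E5 : s ^ 5 = s * s ^ 4) by (simpl; ring).
      assert (E7 : s ^ 7 = s * s * s ^ 5) by (simpl; ring).
      assert (Q4 : 0 <= s ^ 4) by (apply pow_le; lra).
      assert (Q5 : 0 <= s ^ 5) by (apply pow_le; lra).
      simpl ((51/100) ^ 4) in P4. simpl ((51/100) ^ 5) in P5.
      simpl ((51/100) ^ 6) in P6. simpl ((51/100) ^ 7) in P7.
      split; [|split].
      * nra.
      * assert (Hy : r + Y >= r - 7 * s ^ 6) by lra.
        assert (H1r : 0 <= 1 - r) by lra.
        assert ((r + Y) * (1 - r) >= (r - 7 * s ^ 6) * (1 - r)) by nra.
        assert (r * X <= r * (6 * s ^ 5)) by nra.
        nra.
      * nra.
Qed.

Lemma Q0 r : Qn r 0 = 0. Proof. reflexivity. Qed.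
Lemma Q1 r : Qn r 1 = 1. Proof. reflexivity. Qed.
Lemma Q2 r : Qn r 2 = 1. Proof. simpl; ring. Qed.
Lemma Pn_eq r n : Pn r n = Qn r (S n) - Qn r n.
Proof. rewrite Qn_S; ring. Qed.



Ltac qsimp := unfold Pn; repeat rewrite Qrec; simpl Qn.
Ltac pos := repeat (first [apply Rdiv_le_0_compat | apply Rmult_le_pos]); first [lra | nra].
Ltac fin Hc := first [ solve [lra] | solve [pos]
  | solve [try rewrite Hc; qsimp; field; repeat split; try assumption; lra] | solve [nra] ].

Lemma key h r c : r = 1/4 + h * h -> 1/4 < r < 1 -> c = 1 / (1 - r * r) ->
  forall v, Vp h r c v -> co (Vp h r c) (F1 h v) /\ co (Vp h r c) (F2 h v).
Proof.  intros Hrh Hr Hc.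
  assert (Hc1 : 1 - r * r <> 0) by nra.
  assert (Hr1 : 1 + r <> 0) by lra.
  assert (Hr2 : 2 - r <> 0) by lra.
  assert (Hr3 : 1 + 2 * r <> 0) by lra.
  assert (cZ : forall k, co (Vp h r c) (pt h (- c * r * Qn r k) (c * Qn r (S k)))).
  { intros k; apply co_in; right; left; exists k; reflexivity. }
  assert (cW : forall k, (1 <= k)%nat -> co (Vp h r c) (pt h (1 - c * r * Pn r k) (- c * r * Qn r k))).
  { intros k Hk; apply co_in; right; right; exists k; split; [exact Hk|reflexivity]. }
  assert (cB : co (Vp h r c) (pt h (c * r * r) 1)).
  { apply co_in; left; reflexivity. }
  assert (cP : co (Vp h r c) (pt h (1 / (1 + r)) 0)).
  { apply (comb3 _ h _ _ (1 / (1 + r)) _ _ (r / (1 + r)) _ _ 0 _ _ (cW 1%nat (le_n 1)) (cZ 0%nat) (cZ 0%nat)).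
    all: try fin Hc. }
  intros v [Hv|[[k Hv]|[k [Hk Hv]]]]; subst v.
  -
    rewrite (F1_pt h r _ _ Hrh), (F2_pt h r _ _ Hrh). split.
    + apply (comb3 _ h _ _ (1 - r * r) _ _ (r * r) _ _ 0 _ _ (cZ 1%nat) (cZ 0%nat) (cZ 0%nat)).
      all: try fin Hc.
    + apply (comb3 _ h _ _ (1 - r) _ _ r _ _ 0 _ _ (cW 1%nat (le_n 1)) (cZ 1%nat) (cZ 0%nat)).
      all: try fin Hc.
  -
    unfold Zp. rewrite (F1_pt h r _ _ Hrh), (F2_pt h r _ _ Hrh). split.
    + replace (pt h (- r * (c * Qn r (S k))) (- c * r * Qn r k + c * Qn r (S k)))
        with (pt h (- c * r * Qn r (S k)) (c * Qn r (S (S k)))).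
      * apply cZ.
      * rewrite Qrec; unfold pt; apply C_ext; cbn [fst snd]; field.
    + destruct k as [|m].
      * apply (comb3 _ h _ _ (r / (2 - r)) _ _ ((1 - r) / (2 - r)) _ _ ((1 - r) / (2 - r)) _ _
                 (cZ 2%nat) (cW 1%nat (le_n 1)) cP).
        all: try fin Hc.
      * replace (pt h (1 - - c * r * Qn r (S m) - r * (c * Qn r (S (S m)))) (- c * r * Qn r (S m)))
          with (pt h (1 - c * r * Pn r (S m)) (- c * r * Qn r (S m))).
        -- apply cW; lia.
        -- rewrite Qrec; unfold pt, Pn; apply C_ext; cbn [fst snd]; field.
  -
    destruct k as [|m]; [lia|]. clear Hk.
    unfold Wp. rewrite (F1_pt h r _ _ Hrh), (F2_pt h r _ _ Hrh). split.
    +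
      destruct m as [|m].
      { apply (comb3 _ h _ _ r _ _ (1 - r) _ _ 0 _ _ (cW 2%nat (le_S _ _ (le_n 1))) (cZ 1%nat) (cZ 0%nat)).
        all: try fin Hc. }
      destruct m as [|m].
      { apply (comb3 _ h _ _ r _ _ (r - r * r) _ _ ((1 - r) * (1 - r)) _ _ cB (cW 2%nat (le_S _ _ (le_n 1))) (cZ 1%nat)).
        all: try fin Hc. }
      destruct m as [|m].
      { apply (comb3 _ h _ _ (r / (1 + 2 * r)) _ _ ((r * (2 + r - r * r)) / (1 + 2 * r)) _ _
                 ((1 - r) * (1 - r) * (1 + r) / (1 + 2 * r)) _ _ (cW 4%nat ltac:(lia)) (cZ 0%nat) (cZ 1%nat)).
        all: try fin Hc. }
      destruct (Rle_lt_dec (1/2) r) as [Hbig|Hsmall].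
      * apply (comb5 _ h _ _ (r * (2 * r - 1)) _ _ (r * r * (1 - r)) _ _ (r * (1 - r) * (3 - r)) _ _
                 ((1 - r) * (1 - r) * (1 - r)) _ _ (r * (1 - r) * (1 - r)) _ _
                 (cZ (S m)) (cZ m) (cZ 0%nat) (cZ 1%nat) cP).
        all: try fin Hc.
      * destruct (regionI r (S (S (S (S m)))) ltac:(split; lra) (le_n_S _ _ (le_n_S _ _ (le_n_S _ _ (le_n_S _ _ (Nat.le_0_l m)))))) as (G1 & G2 & G3).
        set (k := S (S (S (S m)))) in *.
        apply (comb3 _ h _ _ (1 - r - Qn r (S k) + r * Qn r k) _ _ ((r + Qn r (S k)) * (1 - r) - r * Qn r k) _ _
                 (r * r + r * Qn r (S k)) _ _ (cZ 0%nat) (cZ 1%nat) cP).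
        1-3: lra.
        -- ring.
        -- rewrite Hc, ?Q0, ?Q1, ?Q2. field; auto.
        -- rewrite Hc, ?Q0, ?Q1, ?Q2, ?Pn_eq. field; auto.
    +
      destruct m as [|j].
      * replace (pt h (1 - (1 - c * r * Pn r 1) - r * (- c * r * Qn r 1)) (1 - c * r * Pn r 1))
          with (pt h (c * r * r) 1); [exact cB|].
        unfold pt; simpl; apply C_ext; cbn [fst snd]; field.
      * apply (comb3 _ h _ _ (1 - r * r) _ _ (r * r) _ _ 0 _ _ (cZ 0%nat) (cZ j) (cZ 0%nat)).
        all: try fin Hc.
Qed.

Lemma pow_pt h r : r = 1/4 + h * h -> forall n, Defs.Cpow (1/2, h) n = pt h (Pn r n) (Qn r n).
Proof.
  intros Hr n. induction n as [|n IH].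
  - unfold pt; apply C_ext; simpl; field.
  - change (Defs.Cpow (1/2, h) (S n)) with (Cmult (1/2, h) (Defs.Cpow (1/2, h) n)).
    rewrite IH. change (Cmult (1/2, h) (pt h (Pn r n) (Qn r n))) with (F1 h (pt h (Pn r n) (Qn r n))).
    rewrite (F1_pt h r _ _ Hr). rewrite (Qn_S r n). reflexivity.
Qed.

Lemma co_mono (S T : C -> Prop) : (forall v, S v -> T v) -> forall z, co S z -> co T z.
Proof.
  intros H z (l & F & W & E). exists l. split; [|split; assumption].
  eapply List.Forall_impl; [|exact F]. intros p [H1 H2]; split; auto.
Qed.

Lemma F1_aff h l : F1 h (csum l) = csum (map (fun p => (fst p, F1 h (snd p))) l).
Proof.
  induction l as [|p l IH]; unfold csum in *; simpl.
  - unfold F1; apply C_ext; simpl; ring.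
  - rewrite <- IH. destruct p as [x [u v]]. unfold F1. destruct (fold_right _ _ _) as [s1 s2].
    apply C_ext; simpl; ring.
Qed.

Lemma F2_aff h l : csum (map (fun p => (fst p, F2 h (snd p))) l) =
  Cminus (RtoC (wsum l)) (Cmult (Cconj (1/2, h)) (csum l)).
Proof.
  induction l as [|p l IH]; unfold csum, wsum in *; simpl.
  - unfold F2, Cminus; apply C_ext; simpl; ring.
  - rewrite IH. destruct p as [x [u v]]. unfold F2, Cminus.
    destruct (fold_right Cplus _ _) as [s1 s2].
    apply C_ext; simpl; ring.
Qed.

Theorem lemma3p3 (eta : R) (Heta : 0 < eta < PI / 3) :
  forall z : C, co (Vset eta) z ->
    co (Vset eta) (f1 eta z) /\ co (Vset eta) (f2 eta z).
Proof.
  intros z Hz.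
  assert (Hcos : 1/2 < cos eta).
  { rewrite <- cos_PI3. apply cos_decreasing_1; try lra; pose proof PI_RGT_0; lra. }
  assert (Hcos1 : cos eta <= 1) by apply COS_bound.
  assert (Hsin : 0 < sin eta) by (apply sin_gt_0; pose proof PI_RGT_0; lra).
  assert (Hsc : sin eta ^ 2 + cos eta ^ 2 = 1).
  { pose proof (sin2_cos2 eta) as E. unfold Rsqr in E. simpl. lra. }
  set (h := - sin eta / (2 * cos eta)).
  set (r := 1/4 + h * h).
  set (c := 1 / (1 - r * r)).
  assert (Hrh : r = 1/4 + h * h) by reflexivity.
  assert (Hr4 : r = 1 / (4 * (cos eta * cos eta))).
  { unfold r, h. replace (1 / (4 * (cos eta * cos eta))) with ((sin eta ^ 2 + cos eta ^ 2) / (4 * (cos eta * cos eta)))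
      by (rewrite Hsc; reflexivity). field. lra. }
  assert (Hr : 1/4 < r < 1).
  { split.
    - unfold r. assert (0 < h * h); [|lra]. unfold h.
      assert (0 < sin eta / (2 * cos eta)) by (apply Rdiv_lt_0_compat; lra). nra.
    - rewrite Hr4. apply Rmult_lt_reg_r with (4 * (cos eta * cos eta)); [nra|].
      unfold Rdiv. rewrite Rmult_assoc, Rinv_l; nra. }
  assert (Ha : a_of eta = (1/2, h)).
  { unfold a_of, Cexpi, Cdiv, Cinv, Cmult, RtoC. rewrite cos_neg, sin_neg.
    apply C_ext; simpl; unfold h; field; lra. }
  assert (Hmod2 : Cmod (a_of eta) ^ 2 = r).
  { rewrite Ha. unfold Cmod. rewrite pow2_sqrt; [simpl; unfold r; field|].
    simpl. nra. }
  assert (Hmod4 : Cmod (a_of eta) ^ 4 = r * r).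
  { replace (Cmod (a_of eta) ^ 4) with ((Cmod (a_of eta) ^ 2) ^ 2) by ring. rewrite Hmod2. ring. }
  assert (Hc : c_of eta = c) by (unfold c_of, c; rewrite Hmod4; reflexivity).
  assert (EZ : forall k, z_k eta k = Zp h r c k).
  { intros k. unfold z_k. rewrite Hc, Ha, (pow_pt h r Hrh). unfold Zp, pt, Pn.
    apply C_ext; simpl; field. }
  assert (EW : forall k, w_k eta k = Wp h r c k).
  { intros k. unfold w_k. rewrite Hc, Hmod2, Ha, (pow_pt h r Hrh). unfold Wp, pt, Cminus.
    apply C_ext; simpl; field. }
  assert (EB : b_k eta 0 = pt h (c * r * r) 1).
  { unfold b_k. rewrite Hc, Hmod4, Ha. simpl Defs.Cpow. unfold pt. apply C_ext; simpl; field. }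
  assert (HV : forall v, Vset eta v <-> Vp h r c v).
  { intros v. unfold Vset, Vp. rewrite EB. split.
    - intros [H|[[k H]|[k [Hk H]]]]; [left; exact H|right; left; exists k; rewrite <- EZ; exact H|
        right; right; exists k; split; [exact Hk|rewrite <- EW; exact H]].
    - intros [H|[[k H]|[k [Hk H]]]]; [left; exact H|right; left; exists k; rewrite EZ; exact H|
        right; right; exists k; split; [exact Hk|rewrite EW; exact H]]. }
  assert (Hz' : co (Vp h r c) z) by (apply (co_mono (Vset eta)); [intros v; apply HV|exact Hz]).
  assert (K := key h r c Hrh Hr eq_refl).
  assert (E1 : f1 eta z = F1 h z) by (unfold f1, F1; rewrite Ha; reflexivity).
  assert (E2 : f2 eta z = F2 h z) by (unfold f2, F2; rewrite Ha; reflexivity).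
  rewrite E1, E2. split; apply (co_mono (Vp h r c)); try (intros v; apply HV).
  - apply (co_image (Vp h r c) (Vp h r c) (F1 h)); [|intros v Hv; apply (K v Hv)|exact Hz'].
    intros l _. apply F1_aff.
  - apply (co_image (Vp h r c) (Vp h r c) (F2 h)); [|intros v Hv; apply (K v Hv)|exact Hz'].
    intros l W. rewrite F2_aff, W. reflexivity.
Qed.
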